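(* Let $\mu$ be a probability distribution on $(E,\mathscr{E})$ and $Q$ an isometric involution of $L^{2}(\mu)$ given by a Markov kernel. If the Markov operator $P$ is $(\mu,Q)$-self-adjoint then $QP$ and $PQ$ are $\mu$-self-adjoint; if $P$ is $\mu$-self-adjoint then $QP$ and $PQ$ are $(\mu,Q)$-self-adjoint. As a result a $(\mu,Q)$-self-adjoint Markov operator is always the composition of two $\mu$-self-adjoint Markov operators.
   Context: $\langle f,g\rangle_{\mu}=\int fg\,{\rm d}\mu$ on $L^{2}(\mu)$. An isometric involution is a linear operator $Q$ on $L^{2}(\mu)$ with $\langle Qf,Qg\rangle_{\mu}=\langle f,g\rangle_{\mu}$ for all $f,g$ and $Q^{2}={\rm Id}$; here $Q$ is the operator of a Markov kernel. A Markov operator $P$ on $L^{2}(\mu)$ is $\mu$-self-adjoint if $\langle Pf,g\rangle_{\mu}=\langle f,Pg\rangle_{\mu}$ for all $f,g$, and $(\mu,Q)$-self-adjoint if $\langle Pf,g\rangle_{\mu}=\langle f,QPQg\rangle_{\mu}$ for all $f,g\in L^{2}(\mu)$. *)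

(* Defs.v *)
From HB Require Import structures.
From mathcomp Require Import all_boot all_order all_algebra.
From mathcomp Require Import all_classical all_reals all_analysis.
Set Implicit Arguments. Unset Strict Implicit. Unset Printing Implicit Defensive.
Import Order.TTheory GRing.Theory Num.Theory.
Local Open Scope classical_set_scope.
Local Open Scope ring_scope.

Section Defs.
Context {d : measure_display} {E : measurableType d} {R : realType}.

(* f belongs to L^2(mu) (as a function; equality in L^2 is taken mu-a.e.) *)
Definition L2 (mu : {measure set E -> \bar R}) (f : E -> R) : Prop :=
  measurable_fun setT f /\ mu.-integrable setT (fun x => ((f x) ^+ 2)%:E).

Definition ip (mu : {measure set E -> \bar R}) (f g : E -> R) : \bar R :=
  (\int[mu]_x (f x * g x)%:E)%E.

Definition kop (K : R.-pker E ~> E) (f : E -> R) : E -> R :=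
  fun x => fine (\int[K x]_y (f y)%:E)%E.

Definition markov_on_L2 (mu : {measure set E -> \bar R}) (K : R.-pker E ~> E) :=
  forall f, L2 mu f -> L2 mu (kop K f).

Definition mu_self_adjoint (mu : {measure set E -> \bar R})
  (T : (E -> R) -> (E -> R)) :=
  forall f g, L2 mu f -> L2 mu g -> ip mu (T f) g = ip mu f (T g).

Definition muQ_self_adjoint (mu : {measure set E -> \bar R})
  (Q : (E -> R) -> (E -> R)) (T : (E -> R) -> (E -> R)) :=
  forall f g, L2 mu f -> L2 mu g -> ip mu (T f) g = ip mu f (Q (T (Q g))).

Definition isometric_involution (mu : {measure set E -> \bar R})
  (Q : R.-pker E ~> E) :=
  [/\ markov_on_L2 mu Q,
      (forall f g, L2 mu f -> L2 mu g -> ip mu (kop Q f) (kop Q g) = ip mu f g)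
    & (forall f, L2 mu f -> {ae mu, forall x, kop Q (kop Q f) x = f x})].

End Defs.

(* Main.v *)
Require Import Defs.
From HB Require Import structures.
From mathcomp Require Import all_boot all_order all_algebra.
From mathcomp Require Import all_classical all_reals all_analysis.
From mathcomp Require Import measurable_realfun lebesgue_integral kernel ereal.
From mathcomp Require Import lra.
Import Order.TTheory GRing.Theory Num.Theory.
Local Open Scope classical_set_scope.
Local Open Scope ring_scope.

Section Basic.
Context {d : measure_display} {E : measurableType d} {R : realType}
  (mu : probability E R).

Lemma L2_meas f : L2 mu f -> measurable_fun setT f.
Proof. by case. Qed.

Lemma L2_int_mul f g : L2 mu f -> L2 mu g ->
  mu.-integrable setT (fun x => (f x * g x)%:E).
Proof.
move=> [mf If] [mg Ig].
apply: (le_integrable _ _ _ (integrableD _ If Ig)) => //.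
- by apply/measurable_EFinP; exact: measurable_funM.
- move=> x _; rewrite !lee_fin normrM.
  have h1 : `|f x ^+ 2 + g x ^+ 2| = f x ^+ 2 + g x ^+ 2.
    by apply/ger0_norm; rewrite addr_ge0 // sqr_ge0.
  rewrite h1 -(real_normK (num_real (f x))) -(real_normK (num_real (g x))).
  have := normr_ge0 (f x); have := normr_ge0 (g x).
  move: `|f x| `|g x| => a b ha hb; nra.
Qed.

Lemma L2B f g : L2 mu f -> L2 mu g -> L2 mu (fun x => f x - g x).
Proof.
move=> [mf If] [mg Ig]; split; first exact: measurable_funB.
have I2 := integrableD measurableT (integrableZl measurableT (2:R) If) (integrableZl measurableT (2:R) Ig).
apply: (le_integrable _ _ _ I2) => //.
- apply/measurable_EFinP; apply: measurable_funX; exact: measurable_funB.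
- move=> x _; rewrite /= !lee_fin.
  rewrite ger0_norm ?sqr_ge0 // ger0_norm; last by rewrite addr_ge0 // mulr_ge0 // sqr_ge0.
  move: (f x) (g x) => a b; have := sqr_ge0 (a + b); rewrite !expr2 => ?; nra.
Qed.

Lemma L2_cst1 : L2 mu (cst 1).
Proof.
split => //.
have := @finite_measure_integrable_cst _ _ _ mu setT 1 measurableT.
by apply: eq_integrable => // x _ /=; rewrite expr1n.
Qed.

Lemma L2_ae f g : L2 mu f -> measurable_fun setT g ->
  {ae mu, forall x, f x = g x} -> L2 mu g.
Proof.
move=> [mf If] mg H; split => //.
apply/integrableP; split.
  by apply/measurable_EFinP; exact: measurable_funX.
move/integrableP : If => [_ If].
have -> : (\int[mu]_x `|(g x ^+ 2)%:E|)%E = (\int[mu]_x `|(f x ^+ 2)%:E|)%E; last by [].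
apply: ae_eq_integral => //.
- apply: measurableT_comp => //; apply/measurable_EFinP; exact: measurable_funX.
- apply: measurableT_comp => //; apply/measurable_EFinP; exact: measurable_funX.
- by apply: filterS H => x /= -> _.
Qed.

Lemma aesym (f g : E -> R) : {ae mu, forall x, f x = g x} -> {ae mu, forall x, g x = f x}.
Proof. by apply: filterS => x ->. Qed.

Lemma ipC f g : ip mu f g = ip mu g f.
Proof. by rewrite /ip; apply: eq_integral => x _; rewrite mulrC. Qed.

Lemma ip_ae_r f g1 g2 : L2 mu f -> L2 mu g1 -> L2 mu g2 ->
  {ae mu, forall x, g1 x = g2 x} -> ip mu f g1 = ip mu f g2.
Proof.
move=> [mf _] [mg1 _] [mg2 _] H; rewrite /ip.
apply: ae_eq_integral => //.
- by apply/measurable_EFinP; exact: measurable_funM.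
- by apply/measurable_EFinP; exact: measurable_funM.
- by apply: filterS H => x /= -> _.
Qed.

Lemma ip_ae_l f1 f2 g : L2 mu f1 -> L2 mu f2 -> L2 mu g ->
  {ae mu, forall x, f1 x = f2 x} -> ip mu f1 g = ip mu f2 g.
Proof. by move=> L1 L2' Lg H; rewrite ipC (@ip_ae_r g f1 f2) // ipC. Qed.

Lemma ip_fin f g : L2 mu f -> L2 mu g -> ip mu f g \is a fin_num.
Proof. by move=> Lf Lg; apply: integrable_fin_num => //; exact: L2_int_mul. Qed.

Lemma ipB_r f g1 g2 : L2 mu f -> L2 mu g1 -> L2 mu g2 ->
  ip mu f (fun x => g1 x - g2 x) = (ip mu f g1 - ip mu f g2)%E.
Proof.
move=> Lf L1 L2'; rewrite /ip -integralB_EFin //; last 2 first.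
- exact: L2_int_mul.
- exact: L2_int_mul.
by apply: eq_integral => x _; rewrite mulrBr EFinB.
Qed.

Lemma ip_eq0 u : L2 mu u -> ip mu u u = 0%E -> {ae mu, forall x, u x = 0}.
Proof.
move=> [mu_ _] H.
have mE : measurable_fun setT (fun x => (u x * u x)%:E).
  by apply/measurable_EFinP; exact: measurable_funM.
have : (\int[mu]_x `|(u x * u x)%:E|)%E = 0%E.
  rewrite -H /ip; apply: eq_integral => x _.
  by rewrite gee0_abs // lee_fin -expr2 sqr_ge0.
move/(ae_eq_integral_abs mu measurableT mE) => H2.
apply: filterS H2 => x /= /(_ Logic.I) /eqP.
by rewrite eqe mulf_eq0 orbb => /eqP.
Qed.

Lemma weak_ae u v : L2 mu u -> L2 mu v ->
  (forall g, L2 mu g -> ip mu u g = ip mu v g) ->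
  {ae mu, forall x, u x = v x}.
Proof.
move=> Lu Lv H.
have Lw := L2B _ _ Lu Lv.
have : ip mu (fun x => u x - v x) (fun x => u x - v x) = 0%E.
  rewrite ipB_r // ipC (ipC _ v) !H //.
  by rewrite subee // ip_fin.
move/(ip_eq0 _ Lw); apply: filterS => x /eqP; by rewrite subr_eq0 => /eqP.
Qed.

End Basic.


Section Ops.
Context {d : measure_display} {E : measurableType d} {R : realType}
  (mu : probability E R) (Q : R.-pker E ~> E).
Hypothesis HQ : isometric_involution mu Q.

Lemma QL2 f : L2 mu f -> L2 mu (kop Q f).
Proof. by case: HQ => H _ _; exact: H. Qed.

Ltac l2 := repeat first [ assumption | apply: QL2 |
  match goal with H : markov_on_L2 _ ?K |- L2 _ (kop ?K _) => apply: H end ].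

Lemma Qinv f : L2 mu f -> {ae mu, forall x, kop Q (kop Q f) x = f x}.
Proof. by case: HQ => _ _ H; exact: H. Qed.

Lemma Qiso f g : L2 mu f -> L2 mu g -> ip mu (kop Q f) (kop Q g) = ip mu f g.
Proof. by case: HQ => _ H _; exact: H. Qed.

Lemma Qsa h g : L2 mu h -> L2 mu g -> ip mu (kop Q h) g = ip mu h (kop Q g).
Proof.
move=> Lh Lg; rewrite -Qiso ?QL2 //.
apply: ip_ae_l; l2; first exact: Qinv.
all: l2.
Qed.

Lemma resp_ae (T T' : (E -> R) -> E -> R) :
  (forall f, L2 mu f -> L2 mu (T f)) -> (forall f, L2 mu f -> L2 mu (T' f)) ->
  (forall f g, L2 mu f -> L2 mu g -> ip mu (T f) g = ip mu f (T' g)) ->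
  forall h1 h2, L2 mu h1 -> L2 mu h2 -> {ae mu, forall x, h1 x = h2 x} ->
  {ae mu, forall x, T h1 x = T h2 x}.
Proof.
move=> LT LT' H h1 h2 L1 L2' Hae.
apply: weak_ae; [exact: LT|exact: LT|move=> g Lg].
by rewrite !H //; apply: ip_ae_l => //; exact: LT'.
Qed.

Lemma Qresp h1 h2 : L2 mu h1 -> L2 mu h2 -> {ae mu, forall x, h1 x = h2 x} ->
  {ae mu, forall x, kop Q h1 x = kop Q h2 x}.
Proof. by apply: resp_ae; [exact: QL2|exact: QL2|exact: Qsa]. Qed.

Section P1.
Variable P : R.-pker E ~> E.
Hypothesis HP : markov_on_L2 mu P.
Hypothesis A : muQ_self_adjoint mu (kop Q) (kop P).

Lemma PrespA h1 h2 : L2 mu h1 -> L2 mu h2 -> {ae mu, forall x, h1 x = h2 x} ->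
  {ae mu, forall x, kop P h1 x = kop P h2 x}.
Proof.
apply: (resp_ae (kop P) (fun g => kop Q (kop P (kop Q g)))) => //.
by move=> f Lf; apply: QL2; apply: HP; exact: QL2.
Qed.

Lemma part1a : mu_self_adjoint mu (fun f => kop Q (kop P f)).
Proof.
move=> f g Lf Lg.
rewrite Qsa; l2. rewrite A; l2.
apply: ip_ae_r; l2.
apply: Qresp; l2.
apply: PrespA; l2.
exact: Qinv.
Qed.

Lemma part1b : mu_self_adjoint mu (fun f => kop P (kop Q f)).
Proof.
move=> f g Lf Lg.
rewrite A; l2. rewrite -Qsa; l2.
apply: ip_ae_l; l2.
exact: Qinv.
Qed.

End P1.

Section P2.
Variable P : R.-pker E ~> E.
Hypothesis HP : markov_on_L2 mu P.
Hypothesis S : mu_self_adjoint mu (kop P).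

Lemma PrespS h1 h2 : L2 mu h1 -> L2 mu h2 -> {ae mu, forall x, h1 x = h2 x} ->
  {ae mu, forall x, kop P h1 x = kop P h2 x}.
Proof. exact: (resp_ae (kop P) (kop P)). Qed.

Lemma part2a : muQ_self_adjoint mu (kop Q) (fun f => kop Q (kop P f)).
Proof.
move=> f g Lf Lg.
rewrite Qsa; l2. rewrite S; l2.
apply: ip_ae_r; l2.
apply: aesym; apply: Qinv; l2.
Qed.

Lemma part2b : muQ_self_adjoint mu (kop Q) (fun f => kop P (kop Q f)).
Proof.
move=> f g Lf Lg.
rewrite S; l2. rewrite -Qsa; l2.
apply: ip_ae_r; l2.
apply: PrespS; l2.
apply: aesym; exact: Qinv.
Qed.

End P2.
End Ops.

Section Comp.
Context {d : measure_display} {E : measurableType d} {R : realType}.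
Variables (Q P : R.-pker E ~> E).

Definition compk : E -> {measure set E -> \bar R} :=
  mkcomp Q (kernel.kernel_snd (T0:=E) P).

Let compk_meas U : measurable U -> measurable_fun setT (compk ^~ U).
Proof. exact: (measurable_kernel (mkcomp Q (kernel.kernel_snd (T0:=E) P))). Qed.

HB.instance Definition _ := @isKernel.Build _ _ E E R compk compk_meas.

Let compk_prob x : compk x setT = 1%E.
Proof.
rewrite /compk /= /kcomp /=.
rewrite (eq_integral (cst 1%E)); last by move=> y _; rewrite /= prob_kernel.
by rewrite integral_cst //= mul1e prob_kernel.
Qed.

HB.instance Definition _ := @Kernel_isProbability.Build _ _ E E R compk compk_prob.

Definition compK : R.-pker E ~> E := compk.

Lemma integral_compK x (f : E -> \bar R) : (forall z, 0 <= f z)%E ->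
  measurable_fun setT f ->
  (\int[compK x]_z f z = \int[Q x]_y \int[P y]_z f z)%E.
Proof.
move=> f0 mf.
exact: (integral_kcomp Q (kernel.kernel_snd (T0:=E) P) x f0 mf).
Qed.

End Comp.

Ltac mfik := try exact: measurable_kernel; try (by move=> z; exact: funepos_ge0);
  try (by move=> z; exact: funeneg_ge0); try exact: measurable_funepos;
  try exact: measurable_funeneg.

Section KopLemmas.
Context {d : measure_display} {E : measurableType d} {R : realType}.

Lemma kop_meas (K : R.-pker E ~> E) f : measurable_fun setT f ->
  measurable_fun setT (kop K f).
Proof.
move=> mf; rewrite /kop.
have mF : measurable_fun setT (EFin \o f) by exact/measurable_EFinP.
have -> : (fun x => fine (\int[K x]_y (f y)%:E)%E) =
   (fun x => fine (\int[K x]_y (EFin \o f)^\+ y - \int[K x]_y (EFin \o f)^\- y)%E).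
  by apply/funext => x; rewrite [in LHS]integralE.
apply: measurableT_comp; first exact: fine_measurable.
apply: emeasurable_funB; apply: measurable_fun_integral_kernel; mfik.
Qed.

Lemma kop_compK (Q P : R.-pker E ~> E) (f : E -> R) x : measurable_fun setT f ->
  (\int[compK Q P x]_z `|(f z)%:E| < +oo)%E ->
  kop (compK Q P) f x = kop Q (kop P f) x.
Proof.
move=> mf fin.
have mF : measurable_fun setT (EFin \o f) by exact/measurable_EFinP.
have IK : (compK Q P x).-integrable setT (EFin \o f) by apply/integrableP.
pose a := fun y => (\int[P y]_z (EFin \o f)^\+ z)%E.
pose b := fun y => (\int[P y]_z (EFin \o f)^\- z)%E.
have ma : measurable_fun setT a.
  apply: measurable_fun_integral_kernel; mfik.
have mb : measurable_fun setT b.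
  apply: measurable_fun_integral_kernel; mfik.
have a0 y : (0 <= a y)%E by apply: integral_ge0 => z _; exact: funepos_ge0.
have b0 y : (0 <= b y)%E by apply: integral_ge0 => z _; exact: funeneg_ge0.
have Ea : (\int[compK Q P x]_z (EFin \o f)^\+ z = \int[Q x]_y a y)%E.
  apply: integral_compK; first by move=> z; exact: funepos_ge0.
  exact: measurable_funepos.
have Eb : (\int[compK Q P x]_z (EFin \o f)^\- z = \int[Q x]_y b y)%E.
  apply: integral_compK; first by move=> z; exact: funeneg_ge0.
  exact: measurable_funeneg.
have Ia : (Q x).-integrable setT a.
  apply/integrableP; split => //.
  rewrite (eq_integral a); last by move=> y _; rewrite gee0_abs.
  rewrite -Ea; move: (integrable_pos_fin_num measurableT IK).
  by rewrite fin_numE ltey => /andP[_ ->].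
have Ib : (Q x).-integrable setT b.
  apply/integrableP; split => //.
  rewrite (eq_integral b); last by move=> y _; rewrite gee0_abs.
  rewrite -Eb; move: (integrable_neg_fin_num measurableT IK).
  by rewrite fin_numE ltey => /andP[_ ->].
rewrite /kop [in LHS]integralE Ea Eb -integralB //.
congr fine.
apply: ae_eq_integral => //.
- exact: emeasurable_funB.
- apply/measurable_EFinP; exact: kop_meas.
apply: filterS2 (integrable_ae measurableT Ia) (integrable_ae measurableT Ib).
move=> y /(_ Logic.I) fa /(_ Logic.I) fb _ /=.
rewrite /kop integralE fineK // fin_numB; apply/andP; split; [exact: fa|exact: fb].
Qed.

Lemma stationary (mu : probability E R) (K : R.-pker E ~> E) :
  (forall A, measurable A -> (\int[mu]_y K y A)%E = mu A) ->
  forall h : E -> \bar R, (forall z, 0 <= h z)%E -> measurable_fun setT h ->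
  (\int[mu]_y \int[K y]_z h z = \int[mu]_z h z)%E.
Proof.
move=> HA h h0 mh.
pose l := kprobability (measurable_cst (mu : pprobability E R) : measurable_fun setT (fun _ : E => mu : pprobability E R)).
pose k := kernel.kernel_snd (T0:=E) K.
have := integral_kcomp l k point h0 mh.
rewrite /= => <-.
apply: eq_measure_integral => A mA _.
by rewrite /= /kcomp /= HA.
Qed.

End KopLemmas.

Section Part3.
Context {d : measure_display} {E : measurableType d} {R : realType}
  (mu : probability E R) (Q : R.-pker E ~> E).
Hypothesis HQ : isometric_involution mu Q.

Lemma kop1 (K : R.-pker E ~> E) : kop K (cst 1) = cst 1.
Proof.
apply/funext => x; rewrite /kop.
rewrite (eq_integral (cst 1%E)) // integral_cst // prob_kernel mul1e.
by [].
Qed.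

Lemma kop_indic (K : R.-pker E ~> E) (A : set E) y : measurable A ->
  (kop K (\1_A) y)%:E = K y A.
Proof.
move=> mA; rewrite /kop integral_indic // setIT fineK //.
rewrite ge0_fin_numE ?measure_ge0 //.
apply: (le_lt_trans (y := K y setT)); last by rewrite prob_kernel ltey.
by apply: le_measure; rewrite ?inE.
Qed.

Lemma L2_bounded (f : E -> R) : measurable_fun setT f -> (forall x, `|f x| <= 1) -> L2 mu f.
Proof.
move=> mf fb; split => //.
apply: (le_integrable _ _ _ (@finite_measure_integrable_cst _ _ _ mu setT 1 measurableT)) => //.
- apply/measurable_EFinP; exact: measurable_funX.
- move=> x _ /=; rewrite !lee_fin ger0_norm ?sqr_ge0 //; move: (fb x); rewrite ler_norml => /andP[h1 h2]; apply: le_trans (ler_norm _); nra.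
Qed.

Lemma L2_indic A : measurable A -> L2 mu (\1_A).
Proof.
move=> mA; apply: L2_bounded; first exact: measurable_indic.
by move=> x; rewrite /indic; case: (x \in A) => /=; rewrite ?normr0 ?normr1.
Qed.

Variable P : R.-pker E ~> E.
Hypothesis HP : markov_on_L2 mu P.
Hypothesis A : muQ_self_adjoint mu (kop Q) (kop P).

Lemma ipP1 f : L2 mu f -> ip mu (kop P f) (cst 1) = ip mu f (cst 1).
Proof. move=> Lf; rewrite A; [|done|exact: L2_cst1]. by rewrite !kop1.
Qed.

Lemma ipQ1 f : L2 mu f -> ip mu (kop Q f) (cst 1) = ip mu f (cst 1).
Proof. by move=> Lf; rewrite -{1}(kop1 Q) Qiso //; exact: L2_cst1. Qed.

Lemma stat_sets B : measurable B ->
  (\int[mu]_y compK Q P y B)%E = mu B.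
Proof.
move=> mB.
have LB := L2_indic _ mB.
have LPB : L2 mu (kop P (\1_B)) by exact: HP.
have LQPB : L2 mu (kop Q (kop P (\1_B))) by exact: QL2.
transitivity (ip mu (kop Q (kop P (\1_B))) (cst 1)).
  rewrite /ip; apply: eq_integral => y _; rewrite mulr1 -kop_indic //.
  congr EFin; apply: kop_compK; first exact: measurable_indic.
  rewrite (eq_integral (fun z => (\1_B z)%:E)); last first.
    by move=> z _; rewrite gee0_abs // lee_fin indic_ge0.
  rewrite integral_indic // setIT.
  apply: (le_lt_trans (y := compK Q P y setT)); last by rewrite prob_kernel ltey.
  by apply: le_measure; rewrite ?inE.
rewrite ipQ1 // ipP1 // /ip.
rewrite (eq_integral (fun z => (\1_B z)%:E)); last by move=> z _; rewrite mulr1.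
by rewrite integral_indic // setIT.
Qed.

Lemma K2_ae f : L2 mu f ->
  {ae mu, forall x, kop (compK Q P) f x = kop Q (kop P f) x}.
Proof.
move=> Lf.
have mf := L2_meas _ _ Lf.
have mF : measurable_fun setT (fun z => `|(f z)%:E|%E).
  by apply: measurableT_comp => //; exact/measurable_EFinP.
pose phi := fun y => (\int[compK Q P y]_z `|(f z)%:E|)%E.
have mphi : measurable_fun setT phi.
  apply: measurable_fun_integral_kernel => //; first exact: measurable_kernel.
have phi0 y : (0 <= phi y)%E by apply: integral_ge0.
have Iphi : mu.-integrable setT phi.
  apply/integrableP; split => //.
  rewrite (eq_integral phi); last by move=> y _; rewrite gee0_abs.
  rewrite /phi stationary //; last exact: stat_sets.
  have := L2_int_mul _ _ _ Lf (L2_cst1 _); move/integrableP => [_].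
  by under eq_integral do rewrite /= mulr1.
apply: filterS (integrable_ae measurableT Iphi) => x /(_ Logic.I) fx.
apply: kop_compK => //.
by move: fx; rewrite fin_numE ltey => /andP[_].
Qed.

End Part3.

Lemma aetrans {d : measure_display} {E : measurableType d} {R : realType}
  (mu : probability E R) (f g h : E -> R) :
  {ae mu, forall x, f x = g x} -> {ae mu, forall x, g x = h x} ->
  {ae mu, forall x, f x = h x}.
Proof. by move=> H1 H2; apply: filterS2 H1 H2 => x -> ->. Qed.

Theorem proposition2p5 (d : measure_display) (E : measurableType d)
  (R : realType) (mu : probability E R) (Q : R.-pker E ~> E) :
  isometric_involution mu Q ->
  (forall P : R.-pker E ~> E, markov_on_L2 mu P ->
     muQ_self_adjoint mu (kop Q) (kop P) ->
     mu_self_adjoint mu (fun f => kop Q (kop P f)) /\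
     mu_self_adjoint mu (fun f => kop P (kop Q f))) /\
  (forall P : R.-pker E ~> E, markov_on_L2 mu P ->
     mu_self_adjoint mu (kop P) ->
     muQ_self_adjoint mu (kop Q) (fun f => kop Q (kop P f)) /\
     muQ_self_adjoint mu (kop Q) (fun f => kop P (kop Q f))) /\
  (forall P : R.-pker E ~> E, markov_on_L2 mu P ->
     muQ_self_adjoint mu (kop Q) (kop P) ->
     exists K1 K2 : R.-pker E ~> E,
       [/\ markov_on_L2 mu K1, markov_on_L2 mu K2,
           mu_self_adjoint mu (kop K1), mu_self_adjoint mu (kop K2)
         & forall f, L2 mu f ->
             {ae mu, forall x, kop P f x = kop K1 (kop K2 f) x}]).
Proof.
move=> HQ; split; [|split].
- move=> P HP A; split; [exact: (part1a _ _ HQ _ HP A)|exact: (part1b _ _ HQ _ HP A)].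
- move=> P HP S; split; [exact: (part2a _ _ HQ _ HP S)|exact: (part2b _ _ HQ _ HP S)].
- move=> P HP A.
  have LQP f : L2 mu f -> L2 mu (kop Q (kop P f)).
    by move=> Lf; apply: (QL2 _ _ HQ); exact: HP.
  have LK f : L2 mu f -> L2 mu (kop (compK Q P) f).
    move=> Lf; apply: (L2_ae _ _ _ (LQP f Lf)).
      apply: kop_meas; exact: (L2_meas _ _ Lf).
    by apply: aesym; exact: (K2_ae _ _ HQ _ HP A _).
  exists Q, (compK Q P); split.
  + by case: HQ.
  + exact: LK.
  + by move=> f g Lf Lg; exact: (Qsa _ _ HQ).
  + move=> f g Lf Lg.
    rewrite (ip_ae_l _ _ _ _ (LK f Lf) (LQP f Lf) Lg (K2_ae _ _ HQ _ HP A _ Lf)).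
    rewrite (part1a _ _ HQ _ HP A _ _ Lf Lg).
    apply: ip_ae_r => //; [exact: LQP|exact: LK|].
    by apply: aesym; exact: (K2_ae _ _ HQ _ HP A _ Lg).
  + move=> f Lf.
    apply: aesym; apply: (aetrans _ _ (kop Q (kop Q (kop P f)))).
      apply: (Qresp _ _ HQ); [exact: LK|exact: LQP|exact: (K2_ae _ _ HQ _ HP A _ Lf)].
    apply: (Qinv _ _ HQ); exact: HP.
Qed.
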